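(* Let $X_0^*$ be a $\{1,2,\dots\}$-valued random variable with $\mathbf P(X_0^*=k)\sim c_0m^{-k}k^{-\alpha}$ as $k\to\infty$, for some $0<c_0<\infty$ and $2\le\alpha\le4$. For integers $M$, let $X_0^{(M)}:=X_0^*\mathbf 1_{\{X_0^*\le M\}}$ and $p_M:=\big(1+\mathbf E\{[(m-1)X_0^{(M)}-1]m^{X_0^{(M)}}\}\big)^{-1}$. Then, as $M\to\infty$, $$p_M-p_c(X_0^* )\sim\begin{cases}\frac{(m-1)c_0\,p_c(X_0^* )^2}{\alpha-2}\,\frac{1}{M^{\alpha-2}},&2<\alpha\le4,\\[2pt] \frac{1}{(m-1)c_0}\,\frac{1}{\log M},&\alpha=2.\end{cases}$$
   Context: Fix an integer $m\ge2$. $p_c(X_0^* ):=\frac{1}{1+\mathbf E\{[(m-1)X_0^*-1]m^{X_0^*}\}}$, interpreted as $0$ when the expectation is infinite (so $p_c(X_0^* )=0$ when $\alpha=2$, and $p_c(X_0^* )>0$ when $\alpha>2$); it is the critical parameter of the recursive system $X_{n+1}\overset d=(X_{n,1}+\cdots+X_{n,m}-1)^+$ started from the law $(1-p)\delta_0+pP_{X_0^*}$. $a_M\sim b_M$ means $a_M/b_M\to1$. *)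

(* Defs.v *)
From Stdlib Require Import Reals Lra Lia Classical ClassicalEpsilon.
Open Scope R_scope.

Definition series_value (f : nat -> R) : option R :=
  match excluded_middle_informative (exists l, infinite_sum f l) with
  | left H => Some (proj1_sig (constructive_indefinite_description _ H))
  | right _ => None
  end.

(* A law on {0,1,2,...} is given by its mass function q : nat -> R.
   Expectation E{h(X)} = sum_k q k * h k (as a convergent series). *)
Definition expect (q : nat -> R) (h : nat -> R) : option R :=
  series_value (fun k => q k * h k).

Definition gfun (m : nat) (x : nat) : R :=
  ((INR m - 1) * INR x - 1) * (INR m) ^ x.

(* 1 / (1 + E), interpreted as 0 when the expectation is infinite
   (i.e. the series of nonnegative terms diverges). *)
Definition crit_of (E : option R) : R :=
  match E with Some l => / (1 + l) | None => 0 end.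

Definition p_c (m : nat) (q : nat -> R) : R :=
  crit_of (expect q (gfun m)).

(* p_M, where X_0^(M) = X0star 1_{X0star <= M}, so
   E{h(X_0^(M))} = sum_k q k * h (if k <= M then k else 0). *)
Definition p_M (m : nat) (q : nat -> R) (M : nat) : R :=
  crit_of (expect q (fun k => gfun m (if Nat.leb k M then k else 0%nat))).

(* Main.v *)
Require Import Defs.
From Stdlib Require Import Reals Lra Lia Arith Classical ClassicalEpsilon.
From Coquelicot Require Import Coquelicot.
Open Scope R_scope.

Lemma deriv_seq (f : R -> R) (x l : R) (h : nat -> R) :
  derivable_pt_lim f x l ->
  (forall n, (1 <= n)%nat -> h n <> 0) ->
  is_lim_seq h 0 ->
  is_lim_seq (fun n => (f (x + h n) - f x) / h n) l.
Proof.
  intros Hd Hnz Hh.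
  apply is_lim_seq_spec in Hh. apply is_lim_seq_spec.
  intros eps. destruct (Hd eps (cond_pos eps)) as [del Hdel].
  destruct (Hh del) as [N HN]. exists (max N 1). intros n Hn.
  apply Hdel. apply Hnz; lia.
  specialize (HN n ltac:(lia)). rewrite Rminus_0_r in HN. exact HN.
Qed.

Lemma tail_stolz (a D : nat -> R) (E : R) :
  is_lim_seq (sum_f_R0 a) E ->
  is_lim_seq D 0 ->
  (forall k, (1 <= k)%nat -> 0 < D k) ->
  (forall k, (1 <= k)%nat -> D (S k) < D k) ->
  is_lim_seq (fun k => a (S k) / (D k - D (S k))) 1 ->
  is_lim_seq (fun M => (E - sum_f_R0 a M) / D M) 1.
Proof.
  intros HS HD Dpos Ddec Hr.
  apply is_lim_seq_spec in Hr. apply is_lim_seq_spec.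
  intros eps.
  assert (He2 : 0 < eps / 2) by (destruct eps; simpl; lra).
  destruct (Hr (mkposreal _ He2)) as [N0 HN0]. simpl in HN0.
  exists (max N0 1). intros M HM.
  assert (step : forall k, (max N0 1 <= k)%nat ->
    Rabs (a (S k) - (D k - D (S k))) <= eps/2 * (D k - D (S k))).
  { intros k Hk. specialize (HN0 k ltac:(lia)).
    assert (hd : 0 < D k - D (S k)) by (specialize (Ddec k ltac:(lia)); lra).
    replace (a (S k) - (D k - D (S k))) with ((a (S k) / (D k - D (S k)) - 1) * (D k - D (S k))) by (field; lra).
    rewrite Rabs_mult, (Rabs_right (D k - _)) by lra.
    apply Rmult_le_compat_r; lra. }
  assert (ind : forall j, Rabs (sum_f_R0 a (j + M) - sum_f_R0 a M - (D M - D (j + M)%nat))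
                 <= eps/2 * (D M - D (j + M)%nat)).
  { induction j.
    - simpl. replace (sum_f_R0 a M - sum_f_R0 a M - (D M - D M)) with 0 by ring.
      rewrite Rabs_R0. lra.
    - replace (S j + M)%nat with (S (j + M)) by lia. simpl sum_f_R0.
      specialize (step (j + M)%nat ltac:(lia)).
      replace (sum_f_R0 a (j + M) + a (S (j + M)) - sum_f_R0 a M - (D M - D (S (j + M))))
        with ((sum_f_R0 a (j + M) - sum_f_R0 a M - (D M - D (j + M)%nat)) + (a (S (j + M)) - (D (j+M)%nat - D (S (j + M))))) by ring.
      eapply Rle_trans; [apply Rabs_triang|]. lra. }
  assert (L1 : is_lim_seq (fun j => sum_f_R0 a (j + M) - sum_f_R0 a M) (E - sum_f_R0 a M)).
  { apply is_lim_seq_minus'. apply (is_lim_seq_incr_n (sum_f_R0 a) M E). exact HS. apply is_lim_seq_const. }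
  assert (L2 : forall c, is_lim_seq (fun j => c * (D M - D (j + M)%nat)) (c * D M)).
  { intros c. replace (c * D M) with (c * (D M - 0)) by ring.
    apply is_lim_seq_mult'. apply is_lim_seq_const. apply is_lim_seq_minus'. apply is_lim_seq_const.
    apply (is_lim_seq_incr_n D M 0). exact HD. }
  assert (U : Rbar_le (E - sum_f_R0 a M) ((1 + eps/2) * D M)).
  { eapply is_lim_seq_le; [|exact L1|exact (L2 _)].
    intros j. specialize (ind j). apply Rabs_le_between in ind. lra. }
  assert (Lo : Rbar_le ((1 - eps/2) * D M) (E - sum_f_R0 a M)).
  { eapply is_lim_seq_le; [|exact (L2 _)|exact L1].
    intros j. specialize (ind j). apply Rabs_le_between in ind. lra. }
  simpl in U, Lo.
  assert (DM : 0 < D M) by (apply Dpos; lia).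
  replace ((E - sum_f_R0 a M) / D M - 1) with ((E - sum_f_R0 a M - D M) / D M) by (field; lra).
  unfold Rdiv. rewrite Rabs_mult, Rabs_inv, (Rabs_right (D M)) by lra.
  apply (Rmult_lt_reg_r (D M)); [lra|]. rewrite Rmult_assoc, Rinv_l by lra.
  rewrite Rmult_1_r. apply Rabs_def1; destruct eps as [e He]; simpl in *; nra.
Qed.

Lemma partial_stolz (a D : nat -> R) :
  is_lim_seq D p_infty ->
  (forall k, (1 <= k)%nat -> 0 <= D k) ->
  (forall k, (1 <= k)%nat -> D k < D (S k)) ->
  is_lim_seq (fun k => a (S k) / (D (S k) - D k)) 1 ->
  is_lim_seq (fun M => sum_f_R0 a M / D M) 1.
Proof.
  intros HD Dpos Dinc Hr.
  apply is_lim_seq_spec in Hr. apply is_lim_seq_spec in HD. apply is_lim_seq_spec.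
  intros eps.
  assert (He2 : 0 < eps / 2) by (destruct eps; simpl; lra).
  destruct (Hr (mkposreal _ He2)) as [N0 HN0]. simpl in HN0.
  set (N := max N0 1).
  assert (step : forall k, (N <= k)%nat ->
    Rabs (a (S k) - (D (S k) - D k)) <= eps/2 * (D (S k) - D k)).
  { intros k Hk. specialize (HN0 k ltac:(lia)).
    assert (hd : 0 < D (S k) - D k) by (specialize (Dinc k ltac:(lia)); lra).
    replace (a (S k) - (D (S k) - D k)) with ((a (S k) / (D (S k) - D k) - 1) * (D (S k) - D k)) by (field; lra).
    rewrite Rabs_mult, (Rabs_right (D (S k) - _)) by lra.
    apply Rmult_le_compat_r; lra. }
  assert (ind : forall j, Rabs (sum_f_R0 a (j + N) - sum_f_R0 a N - (D (j + N)%nat - D N))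
                 <= eps/2 * (D (j + N)%nat - D N)).
  { induction j.
    - simpl. replace (sum_f_R0 a N - sum_f_R0 a N - (D N - D N)) with 0 by ring.
      rewrite Rabs_R0. lra.
    - replace (S j + N)%nat with (S (j + N)) by lia. simpl sum_f_R0.
      specialize (step (j + N)%nat ltac:(lia)).
      replace (sum_f_R0 a (j + N) + a (S (j + N)) - sum_f_R0 a N - (D (S (j + N)) - D N))
        with ((sum_f_R0 a (j + N) - sum_f_R0 a N - (D (j + N)%nat - D N)) + (a (S (j + N)) - (D (S (j+N)) - D (j + N)%nat))) by ring.
      eapply Rle_trans; [apply Rabs_triang|]. lra. }
  set (B := Rabs (sum_f_R0 a N - D N)).
  destruct (HD (2 * B / eps + 1)) as [N1 HN1].
  exists (max N N1). intros M HM.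
  assert (HB : 0 <= B) by apply Rabs_pos.
  assert (Hep : 0 < eps) by (destruct eps; simpl; lra).
  specialize (HN1 M ltac:(lia)).
  assert (Q : 0 <= 2 * B / eps) by (apply Rmult_le_pos; [lra| left; apply Rinv_0_lt_compat; lra]).
  assert (DM : 0 < D M) by lra.
  assert (DN : 0 <= D N) by (apply Dpos; lia).
  specialize (ind (M - N)%nat). replace (M - N + N)%nat with M in ind by lia.
  assert (T : Rabs (sum_f_R0 a M - D M) <= B + eps/2 * D M).
  { replace (sum_f_R0 a M - D M) with ((sum_f_R0 a M - sum_f_R0 a N - (D M - D N)) + (sum_f_R0 a N - D N)) by ring.
    eapply Rle_trans; [apply Rabs_triang|]. unfold B. nra. }
  assert (T2 : B < eps / 2 * D M).
  { assert (2 * B / eps * eps = 2 * B) by (field; lra). nra. }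
  replace (sum_f_R0 a M / D M - 1) with ((sum_f_R0 a M - D M) / D M) by (field; lra).
  unfold Rdiv. rewrite Rabs_mult, Rabs_inv, (Rabs_right (D M)) by lra.
  apply (Rmult_lt_reg_r (D M)); [lra|]. rewrite Rmult_assoc, Rinv_l by lra.
  rewrite Rmult_1_r. lra.
Qed.

Lemma inv_n_lim : is_lim_seq (fun n => - / INR n) 0.
Proof.
  replace (Finite 0) with (Rbar_opp (Rbar_inv p_infty)) by (simpl; f_equal; ring).
  apply -> is_lim_seq_opp. apply is_lim_seq_inv. apply is_lim_seq_INR. discriminate.
Qed.

Lemma deriv_seq1 (f : R -> R) (l : R) :
  derivable_pt_lim f 1 l ->
  is_lim_seq (fun n => INR n * (f 1 - f (1 - / INR n))) l.
Proof.
  intros Hd. eapply is_lim_seq_ext_loc; [|apply (deriv_seq f 1 l (fun n => - / INR n) Hd); [|apply inv_n_lim]].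
  - exists 1%nat. intros n Hn. assert (0 < INR n) by (apply lt_0_INR; lia).
    replace (1 + - / INR n) with (1 - / INR n) by ring. field. lra.
  - intros n Hn. assert (0 < INR n) by (apply lt_0_INR; lia).
    apply Ropp_neq_0_compat. apply Rinv_neq_0_compat. lra.
Qed.

Lemma rpow_lim (s : R) :
  is_lim_seq (fun n => INR n * (Rpower (1 - / INR n) (-s) - 1)) s.
Proof.
  assert (H := deriv_seq1 (fun x => Rpower x (-s)) _ (derivable_pt_lim_power 1 (-s) Rlt_0_1)).
  assert (E1 : forall y, Rpower 1 y = 1) by (intros y; unfold Rpower; rewrite ln_1, Rmult_0_r, exp_0; reflexivity).
  rewrite !E1 in H.
  assert (H2 := proj1 (is_lim_seq_opp _ _) H). simpl in H2.
  replace (Finite s) with (Finite (- (- s * 1))) by (f_equal; ring).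
  eapply is_lim_seq_ext; [|exact H2].
  intros n. simpl. ring.
Qed.

Lemma ln_lim :
  is_lim_seq (fun n => INR n * (ln (INR n) - ln (INR n - 1))) 1.
Proof.
  assert (H := deriv_seq1 ln _ (derivable_pt_lim_ln 1 Rlt_0_1)).
  rewrite Rinv_1 in H. eapply is_lim_seq_ext_loc; [|exact H].
  exists 2%nat. intros n Hn. simpl. rewrite ln_1.
  assert (1 < INR n) by (apply lt_1_INR; lia).
  replace (1 - / INR n) with ((INR n - 1) / INR n) by (field; lra).
  rewrite ln_div by lra. ring.
Qed.

Lemma invn0 : is_lim_seq (fun n => / INR n) 0.
Proof.
  replace (Finite 0) with (Rbar_inv p_infty) by reflexivity.
  apply is_lim_seq_inv. apply is_lim_seq_INR. discriminate.
Qed.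

Lemma ln_inf : is_lim_seq (fun k => ln (INR k)) p_infty.
Proof.
  apply is_lim_seq_spec. intros K.
  destruct (INR_archimed 1 (exp K) Rlt_0_1) as [N HN]. rewrite Rmult_1_r in HN.
  exists N. intros n Hn. rewrite <- (ln_exp K). apply ln_increasing. apply exp_pos.
  apply Rlt_le_trans with (INR N); [lra| apply le_INR; lia].
Qed.

Lemma series_some (f : nat -> R) (l : R) : infinite_sum f l -> series_value f = Some l.
Proof.
  intros H. unfold series_value.
  destruct (excluded_middle_informative _) as [e|n].
  - destruct (constructive_indefinite_description _ e) as [l' Hl']. simpl.
    f_equal. exact (UL_sequence _ _ _ Hl' H).
  - exfalso. apply n. exists l. exact H.
Qed.

Lemma series_none (f : nat -> R) : ~ (exists l, infinite_sum f l) -> series_value f = None.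
Proof.
  intros H. unfold series_value.
  destruct (excluded_middle_informative _) as [e|n]; [contradiction|reflexivity].
Qed.

Lemma inf_sum_iff (f : nat -> R) (l : R) : infinite_sum f l <-> is_lim_seq (sum_f_R0 f) l.
Proof. rewrite is_lim_seq_Reals. reflexivity. Qed.

Lemma conv_from_ratio (a D : nat -> R) :
  (forall k, 0 <= a k) ->
  (forall k, (1 <= k)%nat -> 0 <= D k) ->
  (forall k, (1 <= k)%nat -> D (S k) < D k) ->
  is_lim_seq (fun k => a (S k) / (D k - D (S k))) 1 ->
  exists E : R, is_lim_seq (sum_f_R0 a) E.
Proof.
  intros apos Dpos Ddec Hr.
  apply is_lim_seq_spec in Hr.
  destruct (Hr (mkposreal 1 Rlt_0_1)) as [N0 HN0]. simpl in HN0.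
  set (N := max N0 1).
  assert (step : forall k, (N <= k)%nat -> a (S k) <= 2 * (D k - D (S k))).
  { intros k Hk. specialize (HN0 k ltac:(lia)).
    assert (hd : 0 < D k - D (S k)) by (specialize (Ddec k ltac:(lia)); lra).
    apply Rabs_def2 in HN0.
    replace (a (S k)) with ((a (S k) / (D k - D (S k))) * (D k - D (S k))) by (field; lra).
    apply Rmult_le_compat_r; lra. }
  assert (ind : forall j, sum_f_R0 a (j + N) <= sum_f_R0 a N + 2 * (D N - D (j + N)%nat)).
  { induction j.
    - simpl. lra.
    - replace (S j + N)%nat with (S (j + N)) by lia. simpl sum_f_R0.
      specialize (step (j + N)%nat ltac:(lia)). lra. }
  assert (gr : Un_growing (sum_f_R0 a)).
  { intros n. simpl. specialize (apos (S n)). lra. }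
  destruct (growing_cv _ gr) as [E HE].
  - exists (sum_f_R0 a N + 2 * D N). intros x [M ->].
    destruct (le_lt_dec M N) as [h|h].
    + assert (H1 := growing_prop _ _ _ gr h). assert (0 <= D N) by (apply Dpos; lia). lra.
    + specialize (ind (M - N)%nat). replace (M - N + N)%nat with M in ind by lia.
      assert (0 <= D M) by (apply Dpos; lia). lra.
  - exists E. apply is_lim_seq_Reals. exact HE.
Qed.

Lemma gfun0 m : gfun m 0 = -1.
Proof. unfold gfun. simpl. ring. Qed.

Lemma expect_M (m M : nat) (q : nat -> R) : infinite_sum q 1 ->
  expect q (fun k => gfun m (if Nat.leb k M then k else 0%nat)) =
  Some (sum_f_R0 (fun k => q k * (gfun m k + 1)) M - 1).
Proof.
  intros hq. unfold expect. apply series_some. apply inf_sum_iff. apply inf_sum_iff in hq.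
  set (f := fun k => q k * gfun m (if Nat.leb k M then k else 0%nat)).
  assert (base : sum_f_R0 f M = sum_f_R0 (fun k => q k * gfun m k) M).
  { apply sum_eq. intros i Hi. unfold f. replace (Nat.leb i M) with true; [reflexivity|].
    symmetry. apply Nat.leb_le. exact Hi. }
  assert (ind : forall j, sum_f_R0 f (j + M) = sum_f_R0 (fun k => q k * gfun m k) M - (sum_f_R0 q (j + M) - sum_f_R0 q M)).
  { induction j.
    - simpl. rewrite base. ring.
    - replace (S j + M)%nat with (S (j + M)) by lia. simpl sum_f_R0. rewrite IHj.
      unfold f. replace (Nat.leb (S (j + M)) M) with false.
      + rewrite gfun0. ring.
      + symmetry. apply Nat.leb_gt. lia. }
  assert (E : sum_f_R0 (fun k => q k * (gfun m k + 1)) M - 1 =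
              sum_f_R0 (fun k => q k * gfun m k) M - (1 - sum_f_R0 q M)).
  { rewrite <- (sum_eq (fun k => q k * gfun m k + q k)) by (intros; ring).
    rewrite sum_plus. ring. }
  rewrite E. apply (is_lim_seq_incr_n _ M). eapply is_lim_seq_ext.
  { intros j. symmetry. apply ind. }
  apply is_lim_seq_minus'. apply is_lim_seq_const. apply is_lim_seq_minus'.
  apply (is_lim_seq_incr_n (sum_f_R0 q) M 1). exact hq. apply is_lim_seq_const.
Qed.

Lemma rpow_neg_lim (s : R) : 0 < s -> is_lim_seq (fun k => Rpower (INR k) (- s)) 0.
Proof.
  intros hs. apply is_lim_seq_spec. intros eps.
  assert (H := proj2 (is_lim_seq_spec _ _) ln_inf (- ln eps / s)).
  destruct H as [N HN]. exists N. intros n Hn. specialize (HN n Hn).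
  rewrite Rminus_0_r. unfold Rpower. rewrite Rabs_right by (left; apply exp_pos).
  rewrite <- (exp_ln eps) by (destruct eps; simpl; lra).
  apply exp_increasing.
  assert (- ln eps / s * s = - ln eps) by (field; lra).
  nra.
Qed.

Lemma mid_lim (m : nat) : (2 <= m)%nat ->
  is_lim_seq (fun n => ((INR m - 1) * INR n - 1 + / INR m ^ n) / ((INR m - 1) * INR n)) 1.
Proof.
  intros hm. assert (Hm : 2 <= INR m) by (replace 2 with (INR 2) by (simpl; ring); apply le_INR; lia).
  set (c := / (INR m - 1)).
  eapply is_lim_seq_ext_loc with (u := fun n => 1 - c * / INR n + c * / INR n * (/ INR m) ^ n).
  - exists 1%nat. intros n Hn. assert (0 < INR n) by (apply lt_0_INR; lia).
    rewrite pow_inv. unfold c. field. split; [|split]; try lra. apply pow_nonzero. lra.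
  - replace (Finite 1) with (Finite (1 - c * 0 + c * 0 * 0)) by (f_equal; ring).
    apply is_lim_seq_plus'. apply is_lim_seq_minus'. apply is_lim_seq_const.
    apply is_lim_seq_mult'. apply is_lim_seq_const. apply invn0.
    apply is_lim_seq_mult'. apply is_lim_seq_mult'. apply is_lim_seq_const. apply invn0.
    apply is_lim_seq_geom. rewrite Rabs_right.
    + apply (Rmult_lt_reg_r (INR m)); [lra|]. rewrite Rinv_l by lra. lra.
    + left. apply Rinv_0_lt_compat. lra.
Qed.

Lemma R1_gt1 (s x : R) : 0 < s -> 2 <= x -> 1 < Rpower (1 - / x) (- s).
Proof.
  intros hs hx. unfold Rpower. rewrite <- exp_0 at 1. apply exp_increasing.
  assert (0 < / x <= / 2) by (split; [apply Rinv_0_lt_compat; lra| apply Rinv_le_contravar; lra]).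
  assert (ln (1 - / x) < 0) by (rewrite <- ln_1; apply ln_increasing; lra).
  replace (- s * ln (1 - / x)) with (s * (- ln (1 - / x))) by ring. idtac.
  apply Rmult_lt_0_compat; lra.
Qed.

Lemma ratio_gt2 (m : nat) (q : nat -> R) (c0 alpha : R) :
  (2 <= m)%nat -> 0 < c0 -> 2 < alpha ->
  is_lim_seq (fun k => q k / (c0 * / (INR m ^ k) * Rpower (INR k) (- alpha))) 1 ->
  is_lim_seq (fun k => q (S k) * (gfun m (S k) + 1) /
     ((INR m - 1) * c0 / (alpha - 2) * Rpower (INR k) (- (alpha - 2))
      - (INR m - 1) * c0 / (alpha - 2) * Rpower (INR (S k)) (- (alpha - 2)))) 1.
Proof.
  intros hm hc0 ha ht.
  assert (Hm : 2 <= INR m) by (replace 2 with (INR 2) by (simpl; ring); apply le_INR; lia).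
  set (s := alpha - 2). assert (hs : 0 < s) by (unfold s; lra).
  set (C := (INR m - 1) * c0 / s).
  set (u := fun n => q n * (gfun m n + 1) /
     (C * Rpower (INR (pred n)) (- s) - C * Rpower (INR n) (- s))).
  change (is_lim_seq (fun k => u (S k)) 1).
  apply (is_lim_seq_incr_1 u).
  assert (HT : is_lim_seq (fun n => s / (INR n * (Rpower (1 - / INR n) (- s) - 1))) 1).
  { replace (Finite 1) with (Finite (s / s)) by (f_equal; field; lra).
    apply is_lim_seq_div'. apply is_lim_seq_const. apply rpow_lim. lra. }
  assert (L := is_lim_seq_mult' _ _ _ _ (is_lim_seq_mult' _ _ _ _ ht (mid_lim m hm)) HT).
  rewrite !Rmult_1_r in L.
  eapply is_lim_seq_ext_loc; [|exact L].
  exists 2%nat. intros n Hn. unfold u.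
  assert (hx : 2 <= INR n) by (replace 2 with (INR 2) by (simpl; ring); apply le_INR; lia).
  set (x := INR n) in *.
  assert (Hp : INR (pred n) = x - 1) by (unfold x; rewrite <- Nat.sub_1_r, minus_INR by lia; simpl; ring).
  rewrite Hp.
  assert (Hx1 : Rpower (x - 1) (- s) = Rpower x (- s) * Rpower (1 - / x) (- s)).
  { rewrite Rpower_mult_distr; [f_equal; field; lra | lra |].
    assert (/ x <= / 2) by (apply Rinv_le_contravar; lra). lra. }
  assert (Hxs : Rpower x (- s) = Rpower x (- alpha) * x ^ 2).
  { unfold s. replace (- (alpha - 2)) with (- alpha + INR 2) by (simpl; ring).
    rewrite Rpower_plus, Rpower_pow by lra. reflexivity. }
  rewrite Hx1, Hxs.
  assert (HR := R1_gt1 s x hs hx).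
  assert (HP : 0 < Rpower x (- alpha)) by (unfold Rpower; apply exp_pos).
  assert (Hmn : INR m ^ n <> 0) by (apply pow_nonzero; lra).
  set (R1 := Rpower (1 - / x) (- s)) in *.
  set (P := Rpower x (- alpha)) in *.
  unfold gfun. fold x. unfold C. field.
  repeat split; try lra.
  replace ((INR m - 1) * c0 * (P * x ^ 2 * R1) - (INR m - 1) * c0 * (P * x ^ 2))
    with (((INR m - 1) * c0) * (P * x ^ 2) * (R1 - 1)) by ring.
  apply Rgt_not_eq. repeat apply Rmult_lt_0_compat; try lra.
Qed.

Lemma ratio_eq2 (m : nat) (q : nat -> R) (c0 alpha : R) :
  (2 <= m)%nat -> 0 < c0 -> alpha = 2 ->
  is_lim_seq (fun k => q k / (c0 * / (INR m ^ k) * Rpower (INR k) (- alpha))) 1 ->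
  is_lim_seq (fun k => q (S k) * (gfun m (S k) + 1) /
     ((INR m - 1) * c0 * ln (INR (S k)) - (INR m - 1) * c0 * ln (INR k))) 1.
Proof.
  intros hm hc0 ha ht. subst alpha.
  assert (Hm : 2 <= INR m) by (replace 2 with (INR 2) by (simpl; ring); apply le_INR; lia).
  set (C := (INR m - 1) * c0).
  set (u := fun n => q n * (gfun m n + 1) /
     (C * ln (INR n) - C * ln (INR (pred n)))).
  change (is_lim_seq (fun k => u (S k)) 1).
  apply (is_lim_seq_incr_1 u).
  assert (HT : is_lim_seq (fun n => 1 / (INR n * (ln (INR n) - ln (INR n - 1)))) 1).
  { replace (Finite 1) with (Finite (1 / 1)) by (f_equal; field).
    apply is_lim_seq_div'. apply is_lim_seq_const. apply ln_lim. lra. }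
  assert (L := is_lim_seq_mult' _ _ _ _ (is_lim_seq_mult' _ _ _ _ ht (mid_lim m hm)) HT).
  rewrite !Rmult_1_r in L.
  eapply is_lim_seq_ext_loc; [|exact L].
  exists 2%nat. intros n Hn. unfold u.
  assert (hx : 2 <= INR n) by (replace 2 with (INR 2) by (simpl; ring); apply le_INR; lia).
  set (x := INR n) in *.
  assert (Hp : INR (pred n) = x - 1) by (unfold x; rewrite <- Nat.sub_1_r, minus_INR by lia; simpl; ring).
  rewrite Hp.
  assert (HP : Rpower x (Ropp 2) = / x ^ 2).
  { rewrite Rpower_Ropp. f_equal. replace 2 with (INR 2) at 1 by (simpl; ring).
    apply Rpower_pow. lra. }
  rewrite HP.
  assert (HL : ln (x - 1) < ln x) by (apply ln_increasing; lra).
  assert (Hmn : INR m ^ n <> 0) by (apply pow_nonzero; lra).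
  unfold gfun. fold x. unfold C. field.
  repeat split; try lra.
  replace ((INR m - 1) * c0 * ln x - (INR m - 1) * c0 * ln (x - 1))
    with (((INR m - 1) * c0) * (ln x - ln (x - 1))) by ring.
  apply Rgt_not_eq. repeat apply Rmult_lt_0_compat; try lra.
Qed.

Theorem lemma8p2 (m : nat) (hm : (2 <= m)%nat)
  (q : nat -> R) (c0 alpha : R)
  (hq_nonneg : forall k, 0 <= q k)
  (hq0 : q 0%nat = 0)
  (hq_sum : infinite_sum q 1)
  (hc0 : 0 < c0)
  (halpha : 2 <= alpha <= 4)
  (htail : Un_cv (fun k => q k / (c0 * / (INR m ^ k) * Rpower (INR k) (- alpha))) 1) :
  (2 < alpha ->
     Un_cv (fun M => (p_M m q M - p_c m q) /
        ((INR m - 1) * c0 * (p_c m q) ^ 2 / (alpha - 2)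
          * / Rpower (INR M) (alpha - 2))) 1)
  /\
  (alpha = 2 ->
     Un_cv (fun M => (p_M m q M - p_c m q) /
        (/ ((INR m - 1) * c0) * / ln (INR M))) 1).
Proof.
  assert (ht := proj2 (is_lim_seq_Reals _ _) htail).
  assert (hP := proj1 (inf_sum_iff _ _) hq_sum).
  assert (Hm : 2 <= INR m) by (replace 2 with (INR 2) by (simpl; ring); apply le_INR; lia).
  set (a' := fun k => q k * (gfun m k + 1)).
  set (S' := sum_f_R0 a').
  assert (a'pos : forall k, 0 <= a' k).
  { intros k. unfold a'. apply Rmult_le_pos; [apply hq_nonneg|].
    destruct k as [|k]; [rewrite gfun0; lra|].
    unfold gfun. rewrite S_INR.
    assert (0 <= INR k) by apply pos_INR.
    assert (0 < INR m ^ S k) by (apply pow_lt; lra).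
    assert (0 <= (INR m - 1) * (INR k + 1) - 1) by nra. nra. }
  assert (Apos : forall k, 0 <= q k * gfun m k).
  { intros k. destruct k as [|k]; [rewrite hq0; lra|].
    apply Rmult_le_pos; [apply hq_nonneg|].
    unfold gfun. rewrite S_INR.
    assert (0 <= INR k) by apply pos_INR.
    assert (0 < INR m ^ S k) by (apply pow_lt; lra).
    assert (0 <= (INR m - 1) * (INR k + 1) - 1) by nra. nra. }
  assert (SA : forall M, sum_f_R0 (fun k => q k * gfun m k) M = S' M - sum_f_R0 q M).
  { intros M. unfold S'. rewrite (sum_eq a' (fun k => q k * gfun m k + q k)) by (intros; unfold a'; ring).
    rewrite sum_plus. ring. }
  assert (HpM : forall M, p_M m q M = / S' M).
  { intros M. unfold p_M. rewrite expect_M by exact hq_sum. unfold crit_of. f_equal. unfold S', a'. ring. }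
  split.
  -
    intros ha.
    set (C := (INR m - 1) * c0 / (alpha - 2)).
    assert (HC : 0 < C) by (unfold C; apply Rmult_lt_0_compat; [nra| apply Rinv_0_lt_compat; lra]).
    set (D := fun k => C * Rpower (INR k) (- (alpha - 2))).
    assert (Hr := ratio_gt2 m q c0 alpha hm hc0 ha ht). fold C in Hr.
    change (is_lim_seq (fun k => a' (S k) / (D k - D (S k))) 1) in Hr.
    assert (Dpos : forall k, 0 < D k) by (intros k; unfold D, Rpower; apply Rmult_lt_0_compat; [lra|apply exp_pos]).
    assert (Ddec : forall k, (1 <= k)%nat -> D (S k) < D k).
    { intros k Hk. unfold D, Rpower. apply Rmult_lt_compat_l; [lra|]. apply exp_increasing.
      assert (0 < INR k) by (apply lt_0_INR; lia).
      assert (ln (INR k) < ln (INR (S k))) by (apply ln_increasing; [lra| rewrite S_INR; lra]).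
      nra. }
    assert (D0 : is_lim_seq D 0).
    { replace (Finite 0) with (Finite (C * 0)) by (f_equal; ring).
      apply is_lim_seq_mult'. apply is_lim_seq_const. apply rpow_neg_lim. lra. }
    destruct (conv_from_ratio a' D a'pos (fun k _ => Rlt_le _ _ (Dpos k)) Ddec Hr) as [E HE].
    assert (Hst := tail_stolz a' D E HE D0 (fun k _ => Dpos k) Ddec Hr).
    assert (HE1 : 1 <= E).
    { assert (Hl := is_lim_seq_le (sum_f_R0 q) S' 1 E).
      simpl in Hl. apply Hl; [|exact hP|exact HE].
      intros n. specialize (SA n). assert (H0 := cond_pos_sum _ n Apos). lra. }
    assert (Hpc : p_c m q = / E).
    { unfold p_c, expect. rewrite (series_some _ (E - 1)).
      - simpl. f_equal. ring.
      - apply inf_sum_iff. eapply is_lim_seq_ext. { intros n. symmetry. apply SA. }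
        apply is_lim_seq_minus'; assumption. }
    apply is_lim_seq_Reals.
    assert (L2 : is_lim_seq (fun M => E / S' M) 1).
    { replace (Finite 1) with (Finite (E / E)) by (f_equal; field; lra).
      apply is_lim_seq_div'. apply is_lim_seq_const. exact HE. lra. }
    assert (L := is_lim_seq_mult' _ _ _ _ Hst L2). rewrite Rmult_1_r in L.
    eapply is_lim_seq_ext_loc; [|exact L].
    apply is_lim_seq_spec in HE. destruct (HE (mkposreal _ Rlt_0_1)) as [N HN]. simpl in HN.
    exists (max N 1). intros M HM. specialize (HN M ltac:(lia)). apply Rabs_def2 in HN.
    rewrite HpM, Hpc.
    assert (HR : 0 < Rpower (INR M) (alpha - 2)) by (unfold Rpower; apply exp_pos).
    rewrite <- Rpower_Ropp. 
    unfold D, C. change (sum_f_R0 a' M) with (S' M).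
    assert (HR2 : 0 < Rpower (INR M) (- (alpha - 2))) by (unfold Rpower; apply exp_pos).
    set (R0 := Rpower (INR M) (- (alpha - 2))) in *.
    destruct HN. field. repeat split; try lra. unfold S'. lra.
  - intros ha2.
    set (C := (INR m - 1) * c0).
    assert (HC : 0 < C) by (unfold C; nra).
    set (D := fun k => C * ln (INR k)).
    assert (Hr := ratio_eq2 m q c0 alpha hm hc0 ha2 ht). fold C in Hr.
    change (is_lim_seq (fun k => a' (S k) / (D (S k) - D k)) 1) in Hr.
    assert (Dpos : forall k, (1 <= k)%nat -> 0 <= D k).
    { intros k Hk. unfold D. apply Rmult_le_pos; [lra|]. rewrite <- ln_1.
      apply ln_le; [lra|]. replace 1 with (INR 1) by reflexivity. apply le_INR. exact Hk. }
    assert (Dinc : forall k, (1 <= k)%nat -> D k < D (S k)).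
    { intros k Hk. unfold D. apply Rmult_lt_compat_l; [lra|].
      assert (0 < INR k) by (apply lt_0_INR; lia).
      apply ln_increasing; [lra| rewrite S_INR; lra]. }
    assert (Dinf : is_lim_seq D p_infty).
    { apply is_lim_seq_spec. intros K.
      destruct (proj2 (is_lim_seq_spec _ _) ln_inf (K / C)) as [N HN].
      exists N. intros n Hn. specialize (HN n Hn). unfold D.
      assert (K / C * C = K) by (field; lra). nra. }
    assert (Hst := partial_stolz a' D Dinf Dpos Dinc Hr).
    assert (Hpc : p_c m q = 0).
    { unfold p_c, expect. rewrite series_none; [reflexivity|].
      intros [l Hl]. apply inf_sum_iff in Hl.
      assert (HS : is_lim_seq S' (l + 1)).
      { eapply is_lim_seq_ext. { intros n. specialize (SA n). instantiate (1 := fun n => sum_f_R0 (fun k => q k * gfun m k) n + sum_f_R0 q n). simpl. lra. }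
        apply is_lim_seq_plus'; assumption. }
      apply is_lim_seq_spec in HS. apply is_lim_seq_spec in Hst. apply is_lim_seq_spec in Dinf.
      destruct (HS (mkposreal _ Rlt_0_1)) as [N1 HN1].
      destruct (Hst (mkposreal (/2) ltac:(lra))) as [N2 HN2].
      destruct (Dinf (2 * (Rabs l + 2))) as [N3 HN3].
      set (M := max N1 (max N2 (max N3 1))).
      specialize (HN1 M ltac:(lia)). specialize (HN2 M ltac:(lia)). specialize (HN3 M ltac:(lia)).
      simpl in HN1, HN2. apply Rabs_def2 in HN1. apply Rabs_def2 in HN2.
      destruct HN1, HN2.
      assert (0 <= Rabs l) by apply Rabs_pos. assert (l <= Rabs l) by apply RRle_abs.
      assert (DM : 0 < D M) by lra.
      unfold S' in *.
      assert (E1 : sum_f_R0 a' M / D M * D M = sum_f_R0 a' M) by (field; lra).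
      assert (E2 : sum_f_R0 a' M / D M * D M > / 2 * D M) by (apply Rmult_lt_compat_r; lra).
      lra. }
    apply is_lim_seq_Reals.
    assert (L := is_lim_seq_inv _ _ Hst ltac:(injection; lra)). simpl in L. rewrite Rinv_1 in L.
    eapply is_lim_seq_ext; [|exact L].
    intros M. simpl. rewrite HpM, Hpc. unfold D, C, Rdiv.
    rewrite Rminus_0_r, !Rinv_mult, !Rinv_inv. reflexivity.
Qed.
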